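(* Let $H$ be a bialgebra that is projective as a $k$-module, $A$ a left $H$-comodule algebra, and consider the Doi-Hopf datum $(H,A,H)$ ($H$ acting on itself by right multiplication). If $\gamma:H\to\mathrm{Hom}(H,A)$ is an $A$-integral, then $\varphi_\gamma:H\to A$, $\varphi_\gamma(h)=\gamma(h)(1_H)$, is left $H$-colinear; if moreover $\gamma$ is total, then $\varphi_\gamma(1_H)=1_A$, i.e. $\varphi_\gamma$ is a total integral in the sense of Doi.
   Context: $k$ commutative ring; Sweedler notation $\Delta(h)=\sum h_{(1)}\otimes h_{(2)}$, $\rho_A(a)=\sum a_{<-1>}\otimes a_{<0>}$ (iterated $a_{<-2>}\otimes a_{<-1>}\otimes a_{<0>}$). A left $H$-comodule algebra is an algebra $A$ with a left $H$-coaction that is an algebra map. For the Doi-Hopf datum $(H,A,C)$ with $C=H$ and $c\cdot h=ch$, an $A$-integral is a $k$-linear $\gamma:H\to\mathrm{Hom}(H,A)$ with, for all $a\in A$, $c,d\in H$: (i) $\sum a_{<0>}\gamma(ca_{<-2>})(da_{<-1>})=\gamma(c)(d)\,a$; (ii) $\sum c_{(1)}\otimes\gamma(c_{(2)})(d)=\sum d_{(2)}\gamma(c)(d_{(1)})_{<-1>}\otimes\gamma(c)(d_{(1)})_{<0>}$; it is total if $\sum\gamma(c_{(1)})(c_{(2)})=\varepsilon(c)1_A$. A total integral (Doi) is a left $H$-colinear map $\varphi:H\to A$ with $\varphi(1_H)=1_A$. *)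

(* Defs.v *)
From HB Require Import structures.
From mathcomp Require Import all_boot all_order all_algebra.
Set Implicit Arguments. Unset Strict Implicit. Unset Printing Implicit Defensive.
Import Order.TTheory GRing.Theory Num.Theory.
Local Open Scope ring_scope.

(* Elements of tensor products over the commutative ring k are
   represented by finite lists of elementary tensors (Sweedler representatives);
   equality in the tensor product is characterized by the universal property:
   two such lists denote the same tensor iff every k-multilinear map takes the
   same value on them. *)

Section Defs.
Variable k : comNzRingType.

Definition klinear (M N : lmodType k) (f : M -> N) : Prop :=
  forall (a : k) (x y : M), f (a *: x + y) = a *: f x + f y.

Definition kbilinear (M N P : lmodType k) (b : M -> N -> P) : Prop :=
  (forall y, klinear (fun x => b x y)) /\ (forall x, klinear (b x)).

Definition ktrilinear (M N L P : lmodType k) (t : M -> N -> L -> P) : Prop :=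
  (forall y z, klinear (fun x => t x y z)) /\
  (forall x z, klinear (fun y => t x y z)) /\
  (forall x y, klinear (t x y)).

Definition tensor2_eq (M N : lmodType k) (s t : seq (M * N)) : Prop :=
  forall (P : lmodType k) (b : M -> N -> P), kbilinear b ->
    \sum_(p <- s) b p.1 p.2 = \sum_(p <- t) b p.1 p.2.

Definition tensor3_eq (M N L : lmodType k) (s t : seq (M * N * L)) : Prop :=
  forall (P : lmodType k) (b : M -> N -> L -> P), ktrilinear b ->
    \sum_(p <- s) b p.1.1 p.1.2 p.2 = \sum_(p <- t) b p.1.1 p.1.2 p.2.

Definition projective_kmod (M : lmodType k) : Prop :=
  forall (P Q : lmodType k) (f : P -> Q) (g : M -> Q),
    klinear f -> klinear g -> (forall q, exists p, f p = q) ->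
    exists h : M -> P, klinear h /\ forall m, f (h m) = g m.

Variable H : algType k.

(* Delta (h) = sum h_(1) (x) h_(2) ; eps the counit *)
Definition is_bialgebra (Delta : H -> seq (H * H)) (eps : H -> k) : Prop :=
  [/\
      forall (a : k) (x y : H),
        tensor2_eq (Delta (a *: x + y))
                   ([seq (a *: p.1, p.2) | p <- Delta x] ++ Delta y),
      forall h : H,
        tensor3_eq [seq (q.1, q.2, p.2) | p <- Delta h, q <- Delta p.1]
                   [seq (p.1, q.1, q.2) | p <- Delta h, q <- Delta p.2],
      (forall (a : k) (x y : H), eps (a *: x + y) = a * eps x + eps y) /\
      (forall h : H, \sum_(p <- Delta h) eps p.1 *: p.2 = h) /\
      (forall h : H, \sum_(p <- Delta h) eps p.2 *: p.1 = h),
      tensor2_eq (Delta 1) [:: (1, 1)] /\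
      (forall x y : H,
        tensor2_eq (Delta (x * y))
                   [seq (p.1 * q.1, p.2 * q.2) | p <- Delta x, q <- Delta y])
    &
      eps 1 = 1 /\ forall x y : H, eps (x * y) = eps x * eps y].

(* rho (a) = sum a_<-1> (x) a_<0> : a left H-comodule algebra structure on A *)
Definition is_left_comodule_algebra (A : algType k)
    (Delta : H -> seq (H * H)) (eps : H -> k) (rho : A -> seq (H * A)) : Prop :=
  [/\ forall (a : k) (x y : A),
        tensor2_eq (rho (a *: x + y))
                   ([seq (a *: p.1, p.2) | p <- rho x] ++ rho y),
      forall x : A,
        tensor3_eq [seq (q.1, q.2, p.2) | p <- rho x, q <- Delta p.1]
                   [seq (p.1, q.1, q.2) | p <- rho x, q <- rho p.2],
      forall x : A, \sum_(p <- rho x) eps p.1 *: p.2 = x,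
      tensor2_eq (rho 1) [:: (1, 1)]
    & forall x y : A,
        tensor2_eq (rho (x * y))
                   [seq (p.1 * q.1, p.2 * q.2) | p <- rho x, q <- rho y]].

(* A-integral for the Doi-Hopf datum (H, A, H), C = H acted on by right
   multiplication; gamma : H -> Hom(H, A) k-linear, written curried. *)
Definition is_A_integral (A : algType k) (Delta : H -> seq (H * H))
    (rho : A -> seq (H * A)) (gamma : H -> H -> A) : Prop :=
  [/\ (forall d : H, klinear (fun c => gamma c d)),
      forall c : H, klinear (gamma c),
      forall (a : A) (c d : H),
        \sum_(p <- rho a) \sum_(q <- Delta p.1)
            p.2 * gamma (c * q.1) (d * q.2) = gamma c d * a
    & (* (ii) *)
      forall c d : H,
        tensor2_eq [seq (q.1, gamma q.2 d) | q <- Delta c]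
          [seq (q.2 * r.1, r.2) | q <- Delta d, r <- rho (gamma c q.1)]].

Definition is_total_integral (A : algType k) (Delta : H -> seq (H * H))
    (eps : H -> k) (gamma : H -> H -> A) : Prop :=
  forall c : H, \sum_(q <- Delta c) gamma q.1 q.2 = eps c *: (1 : A).

Definition left_colinear (A : algType k) (Delta : H -> seq (H * H))
    (rho : A -> seq (H * A)) (phi : H -> A) : Prop :=
  [/\ klinear phi &
   forall h : H, tensor2_eq (rho (phi h)) [seq (q.1, phi q.2) | q <- Delta h]].

End Defs.

(* Main.v *)
Require Import Defs.
From HB Require Import structures.
From mathcomp Require Import all_boot all_order all_algebra.
Import GRing.Theory.
Local Open Scope ring_scope.

Section Helpers.
Variable k : comNzRingType.

Lemma kl0 {M N : lmodType k} (f : M -> N) : klinear f -> f 0 = 0.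
Proof.
move=> fl; have := fl 1 0 0; rewrite scaler0 add0r scale1r.
move=> e; apply: (@addrI _ (f 0)); by rewrite addr0 -e.
Qed.

Lemma klZ {M N : lmodType k} (f : M -> N) a x : klinear f -> f (a *: x) = a *: f x.
Proof. by move=> fl; have := fl a x 0; rewrite addr0 (kl0 _ fl) addr0. Qed.

Lemma klD {M N : lmodType k} (f : M -> N) x y : klinear f -> f (x + y) = f x + f y.
Proof. by move=> fl; have := fl 1 x y; rewrite !scale1r. Qed.
End Helpers.

Theorem proposition3p1p1 (k : comNzRingType) (H A : algType k)
    (Delta : H -> seq (H * H)) (eps : H -> k) (rho : A -> seq (H * A))
    (gamma : H -> H -> A) :
  is_bialgebra Delta eps ->
  projective_kmod H ->
  is_left_comodule_algebra Delta eps rho ->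
  is_A_integral Delta rho gamma ->
  left_colinear Delta rho (fun h => gamma h 1) /\
  (is_total_integral Delta eps gamma -> gamma 1 1 = 1).
Proof.
move=> [_ _ _ [D1 _] [e1 _]] _ [rlin _ _ _ _] [g1 g2 _ gii].
split; last first.
  move=> tot; have := tot 1; rewrite e1 scale1r.
  rewrite (D1 _ (fun x y => gamma x y)) ?big_seq1.
    by move=> /= ->.
  split=> [y|x] a u v /=; [exact: (g1 y) | exact: (g2 x)].
split; first exact: g1.
move=> h P b [bl br].
rewrite (gii h 1 P b (conj bl br)) big_allpairs_dep /=.
pose b' := fun (x y : H) => \sum_(r <- rho (gamma h x)) b (y * r.1) r.2.
have bb' : kbilinear b'.
  split.
  - move=> y a x z; rewrite /b' /=; rewrite (g2 h a x z).
    have bil : kbilinear (fun (u : H) (v : A) => b (y * u) v).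
      split; last by move=> u; exact: br.
      move=> v a' u w /=; rewrite mulrDr -scalerAr; exact: bl.
    rewrite (rlin a _ _ P _ bil) big_cat big_map /= scaler_sumr.
    congr (_ + _); apply: eq_bigr => r _.
    by rewrite -scalerAr (klZ _ _ _ _ (bl r.2)).
  - move=> x a y z; rewrite /b' scaler_sumr -big_split /=.
    apply: eq_bigr => r _; rewrite mulrDl -scalerAl; exact: bl.
have := D1 P b' bb'; rewrite /b' big_seq1 /= => ->.
by apply: eq_bigr => r _; rewrite mul1r.
Qed.
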